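(* For the tree $\widetilde T$ constructed below there is a constant $C>0$ such that $|\widetilde T_n|\le 3^{C\sqrt n}$ for all $n\ge1$.
   Context: For a rooted tree, $T_n$ denotes the set of edges $e=(e^-,e^+)$ with $e^+$ at distance $n$ from the root. To a nonempty set $E\subset\{0,1,2\}^{\mathbb N}$ associate the rooted tree $\Phi(E)$ whose vertices are all finite words (including the empty word, the root) that are prefixes of some element of $E$, with edges between each such word $w$ and each such word $wj$, $j\in\{0,1,2\}$. The shift is $\mathcal S(a_1,a_2,\dots)=(a_2,a_3,\dots)$. The labelled $1$-$3$ tree $T_{1,3}$: vertices are finite words over $\{0,1,2\}$; the root $\emptyset$ has children $0,1$; a vertex $w$ with $k$ children has children $w0,\dots,w(k-1)$; for each $n\ge1$, ordering the $2^n$ level-$n$ vertices lexicographically, the first $2^{n-1}$ have one child and the last $2^{n-1}$ have three children. Let $R$ be the set of sequences all of whose prefixes are vertices of $T_{1,3}$, $E_0$ the set of sequences $(a_1,a_2,0,a_3,0,0,a_4,0,0,0,a_5,\dots)$ (each $a_k$ followed by $k-1$ zeros) for $(a_k)\in R$, $E_j=\mathcal S(E_{j-1})$, $\widetilde E=\bigcup_{j\ge0}E_j$, and $\widetilde T=\Phi(\widetilde E)$. *)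

(* Defs.v *)
From mathcomp Require Import all_boot.
From mathcomp Require Import boolp.
Set Implicit Arguments. Unset Strict Implicit. Unset Printing Implicit Defensive.

Fixpoint lexle (s t : seq nat) : bool :=
  match s, t with
  | [::], _ => true
  | _ :: _, [::] => false
  | a :: s', b :: t' => (a < b) || ((a == b) && lexle s' t')
  end.

(* level n of the labelled 1-3 tree T_{1,3}: the list of its level-n
   vertices (words of length n), sorted lexicographically. The word "w j"
   is [rcons w j]. *)
Fixpoint level13 (n : nat) : seq (seq nat) :=
  match n with
  | 0 => [:: [::]]
  | n'.+1 =>
    sort lexle
      (match n' with
       | 0 => [:: [:: 0]; [:: 1]]
       | _ =>
         let L := level13 n' in
         flatten [seq (let w := nth [::] L i in
                       if i < 2 ^ n'.-1 then [:: rcons w 0]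
                       else [:: rcons w 0; rcons w 1; rcons w 2])
                 | i <- iota 0 (size L)]
       end)
  end.

Definition vertex13 (w : seq nat) : bool := w \in level13 (size w).

Definition sequence3 := nat -> 'I_3.

Definition prefix (x : sequence3) (n : nat) : seq nat := mkseq (fun i => nat_of_ord (x i)) n.

Definition inR (a : sequence3) : Prop := forall n, vertex13 (prefix a n).

(* triangular numbers: 0-indexed position of a_{k+1} in the E_0 sequence *)
Definition tri (k : nat) : nat := (k * k.+1) %/ 2.

(* E_0 : (a_1, a_2, 0, a_3, 0, 0, a_4, ...) with each a_k followed by k-1 zeros *)
Definition E0 (x : sequence3) : Prop :=
  exists a : sequence3, inR a /\
    (forall k, x (tri k) = a k) /\
    (forall i, (forall k, i <> tri k) -> x i = ord0).

Definition shift (x : sequence3) : sequence3 := fun i => x i.+1.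

Definition Ej (j : nat) (x : sequence3) : Prop :=
  exists y, E0 y /\ x = iter j shift y.

Definition Etilde (x : sequence3) : Prop := exists j, Ej j x.

Definition PhiVertex (E : sequence3 -> Prop) (w : seq 'I_3) : Prop :=
  exists x, E x /\ forall i, i < size w -> x i = nth ord0 w i.

Definition PhiEdges (E : sequence3 -> Prop) (n : nat)
  : {set (n.-1).-tuple 'I_3 * n.-tuple 'I_3} :=
  [set e : (n.-1).-tuple 'I_3 * n.-tuple 'I_3 | `[< PhiVertex E (val e.1) /\ PhiVertex E (val e.2) /\
             exists j : 'I_3, val e.2 = rcons (val e.1) j >] ].

(* Main.v *)
Require Import Defs.
From mathcomp Require Import all_boot.
From mathcomp Require Import boolp.
From Stdlib Require Import Reals Lia Lra.
From mathcomp Require Import zify.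

Lemma triS k : tri k.+1 = tri k + k.+1.
Proof.
rewrite /tri.
have -> : k.+1 * k.+2 = k.+1 * 2 + k * k.+1 by lia.
by rewrite divnMDl // addnC.
Qed.

Lemma tri_double k : 2 * tri k = k * k.+1.
Proof. elim: k => [|k IH]; first by []. rewrite triS. nia. Qed.

Lemma tri_add k t : tri (k + t) = tri k + tri t + k * t.
Proof.
have h1 := tri_double k; have h2 := tri_double t; have h3 := tri_double (k + t).
nia.
Qed.

Lemma tri_ge k : k <= tri k.
Proof. have := tri_double k. nia. Qed.

Lemma tri_lt m n : m < n -> tri m < tri n.
Proof.
move=> H. have [d ->] : exists d, n = m + d.+1 by exists (n - m).-1; lia.
rewrite tri_add. have := tri_ge d.+1. nia.
Qed.

Lemma tri_le m n : m <= n -> tri m <= tri n.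
Proof. rewrite leq_eqVlt => /orP [/eqP -> //| /tri_lt]; lia. Qed.

Lemma tri_inj m n : tri m = tri n -> m = n.
Proof.
move=> H. case: (ltngtP m n) => // h; have := tri_lt _ _ h; lia.
Qed.

Lemma iter_shift j (y : sequence3) i : iter j shift y i = y (i + j).
Proof.
elim: j i => [|j IH] i /=; first by rewrite addn0.
by rewrite /shift IH addSnnS.
Qed.

Section Count.
Variable n : nat.
Hypothesis Hn : 1 <= n.
Definition M := (Nat.sqrt (2 * n)).+1.

Lemma triM t : M <= t -> n < tri t.
Proof.
rewrite /M => H. have [_ h2] := Nat.sqrt_spec' (2 * n).
have := tri_double t. nia.
Qed.

Definition D := ('I_n.+1 * ('I_n.+1 * {ffun 'I_M -> 'I_3}))%type.

Definition code (d : D) : n.-tuple 'I_3 :=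
  let: (p, (k, v)) := d in
  [tuple (if [pick t : 'I_M | (i : nat) == p + (tri (k + t) - tri k)] is Some t then v t else ord0) | i < n].


Lemma key (w : n.-tuple 'I_3) : PhiVertex Etilde (val w) -> exists d, w = code d.
Proof.
move=> [x [[j [y [[a [_ [Ha Hz]]] Exy]]] Hw]].
have Hwi : forall i : 'I_n, tnth w i = y (i + j).
  move=> i; rewrite (tnth_nth ord0) -Hw ?size_tuple // Exy iter_shift //.
have exP : exists k, j <= tri k by exists j; exact: tri_ge.
case: (ex_minnP exP) => k0 Hk0 Hmin.
set p := tri k0 - j.
have Hpj : p + j = tri k0 by rewrite /p; lia.
have HK : forall K, j <= tri K -> k0 <= K by move=> K h; apply: Hmin.
case: (leqP n p) => Hp.
- exists (ord_max, (ord0, [ffun _ => ord0])).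
  apply: eq_from_tnth => i; rewrite Hwi tnth_mktuple.
  case: pickP => [t /eqP Ht | _]; first by have := ltn_ord i; rewrite /= in Ht; lia.
  have [[K HKe]|HnK] := pselect (exists K, i + j = tri K).
    have h1 := HK K ltac:(lia). have := tri_le _ _ h1. have := ltn_ord i. lia.
  by apply: Hz => k hk; apply: HnK; exists k.
have Hp1 : p < n.+1 by lia.
case: (leqP k0 n) => Hk.
- have Hk1 : k0 < n.+1 by lia.
  exists (Ordinal Hp1, (Ordinal Hk1, [ffun t : 'I_M => a (k0 + t)])).
  apply: eq_from_tnth => i; rewrite Hwi tnth_mktuple /=.
  case: pickP => [t /eqP Ht | Hnone].
    rewrite ffunE -Ha. congr y. have := tri_le k0 (k0 + t) (leq_addr _ _). lia.
  have [[K HKe]|HnK] := pselect (exists K, i + j = tri K).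
    have h1 := HK K ltac:(lia).
    have htK : tri (K - k0) <= i - p.
      have := tri_add k0 (K - k0). have -> : k0 + (K - k0) = K by lia.
      move: (k0 * (K - k0)) => z. lia.
    have hM : K - k0 < M.
      case: (leqP (M) (K - k0)) => // hh. have := triM _ hh. have := ltn_ord i. lia.
    have /negbT/eqP H := Hnone (Ordinal hM); exfalso; apply: H => /=.
    have -> : k0 + (K - k0) = K by lia. have := tri_le _ _ h1. lia.
  by apply: Hz => k hk; apply: HnK; exists k.
- exists (Ordinal Hp1, (ord_max, [ffun _ => a k0])).
  apply: eq_from_tnth => i; rewrite Hwi tnth_mktuple /=.
  case: pickP => [t /eqP Ht | Hnone].
    rewrite ffunE -Ha. congr y.
    case: (posnP t) => ht.
      rewrite ht addn0 subnn addn0 in Ht; lia.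
    have := tri_add n t. have := tri_ge t. have := ltn_ord i. nia.
  have [[K HKe]|HnK] := pselect (exists K, i + j = tri K).
    have h1 := HK K ltac:(lia).
    case: (leqP K k0) => hK.
      have eK : K = k0 by lia.
      have hM : 0 < M by [].
      have /negbT/eqP H := Hnone (Ordinal hM); exfalso; apply: H => /=.
      rewrite addn0 subnn addn0. subst K. lia.
    have := tri_le _ _ hK. rewrite triS. have := ltn_ord i. lia.
  by apply: Hz => k hk; apply: HnK; exists k.
Qed.

End Count.

Lemma card_bound n : 1 <= n -> #|PhiEdges Etilde n| <= expn 3 (M n * 5).
Proof.
move=> Hn.
have inj : {in PhiEdges Etilde n &, injective (@snd _ _)}.
  move=> [e1 e2] [e1' e2']; rewrite !inE => /asboolP [_ [_ [j Hj]]] /asboolP [_ [_ [j' Hj']]] /= H.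
  have : rcons (val e1) j = rcons (val e1') j' by rewrite -Hj -Hj' H.
  by case/rcons_inj => h _; congr pair => //; apply: val_inj.
rewrite -(card_in_imset inj).
apply: leq_trans (_ : #|[set @code n d | d : D n]| <= _).
  apply: subset_leq_card; apply/subsetP => w /imsetP [e He ->].
  move: He; rewrite inE => /asboolP [_ [H2 _]].
  have [d ->] := @key n Hn e.2 H2. by apply: imset_f.
apply: leq_trans (leq_imset_card _ _) _.
rewrite /D !card_prod card_ffun !card_ord.
set X := expn 3 (M n).
have hM : M n < X := ltn_expl _ (isT : 1 < 3).
have hn : n.+1 <= M n * M n.
  rewrite /M. have [_ h2] := Nat.sqrt_spec' (2 * n). lia.
have hX : n.+1 <= X * X by apply: leq_trans hn _; apply: leq_mul; apply: ltnW.
rewrite expnM -/X !expnS expn0 muln1.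
have h2 : n.+1 * n.+1 <= X * X * (X * X) by apply: leq_mul.
have h3 := leq_mul h2 (leqnn X).
rewrite mulnA; apply: leq_trans h3 _; rewrite -!mulnA; done.
Qed.

Lemma INR_expn a m : INR (expn a m) = (INR a ^ m)%R.
Proof. elim: m => [|m IH]; first by rewrite expn0. by rewrite expnS -multE mult_INR IH. Qed.

Lemma M_real n : 1 <= n -> (INR (M n) <= 3 * sqrt (INR n))%R.
Proof.
move=> Hn. rewrite /M S_INR.
set s := Nat.sqrt (2 * n).
have [h1 _] := Nat.sqrt_spec' (2 * n).
have hs : (INR s * INR s <= 2 * INR n)%R.
  rewrite -mult_INR (_ : 2%R = INR 2) // -mult_INR. apply: le_INR. fold s in h1. lia.
have hs2 : (INR s <= sqrt 2 * sqrt (INR n))%R.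
  rewrite -sqrt_mult; [|lra|apply: pos_INR].
  rewrite -(sqrt_square (INR s)); last by apply: pos_INR.
  by apply: sqrt_le_1_alt.
have hq : (sqrt 2 <= 2)%R.
  rewrite -{2}(sqrt_square 2); last lra. apply: sqrt_le_1_alt; lra.
have hn1 : (1 <= sqrt (INR n))%R.
  rewrite -sqrt_1. apply: sqrt_le_1_alt. apply: (le_INR 1). lia.
have hsn : (0 <= sqrt (INR n))%R by apply: sqrt_pos.
nra.
Qed.

Theorem mainTheorem3 :
  exists C : R, (0 < C)%R /\
    forall n : nat, (1 <= n)%N ->
      (INR #|PhiEdges Etilde n| <= Rpower 3 (C * sqrt (INR n)))%R.
Proof.
exists 15%R; split; first lra.
move=> n Hn.
apply: Rle_trans (_ : INR (expn 3 (M n * 5)) <= _)%R.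
  apply: le_INR. apply/leP. exact: card_bound.
rewrite INR_expn -Rpower_pow; last by simpl; lra.
rewrite (_ : INR 3 = 3%R); last by simpl; lra.
apply: Rle_Rpower; first lra.
rewrite -multE mult_INR (_ : INR 5 = 5%R); last by simpl; lra.
have := @M_real n Hn. lra.
Qed.
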